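(* Let $F\neq\{0\}$ be a finite abelian group, and let $A$ and $A_1$ be skew braces on $F\times\mathbb{Z}/2\mathbb{Z}$ constructed from data $(\phi,y,z)$ and $(\phi_1,y_1,z_1)$ respectively, as described in the context. Then $A$ and $A_1$ are isomorphic if and only if there exists $\sigma\in\operatorname{Aut}(F)$ such that $\phi_1=\sigma\circ\phi\circ\sigma^{-1}$, $\sigma(y)=y_1$, and $z_1-\sigma(z)\in\phi_1(F)$.
   Context: Admissible data on a finite abelian group $F\ne\{0\}$: a triple $(\phi,y,z)$ with $\phi\in\operatorname{End}(F)$, $y,z\in F$, $2y=0$, $\phi(z)=\phi(y)-2z$, $\phi(\phi(f))=-2\phi(f)$ for all $f\in F$, and such that the map $\psi\colon F\times\mathbb{Z}/2\mathbb{Z}\times\mathbb{Z}/2\mathbb{Z}\to F$, $\psi(f,k_1,k_2)=[k_2](\phi(f)-[k_1]z)$, is surjective. Here for $k\in\mathbb{Z}/2\mathbb{Z}$, $[k]\in\{0,1\}$ is its representative. The skew brace built from $(\phi,y,z)$ is the set $F\times\mathbb{Z}/2\mathbb{Z}$ with $(f_1,k_1)+(f_2,k_2)=(f_1+(-1)^{k_1}f_2+[k_1][k_2]y,\,k_1+k_2)$ and $(f_1,k_1)\circ(f_2,k_2)=(f_1+(-1)^{k_1}f_2+\psi(f_1,k_1,k_2)+[k_1][k_2]y,\,k_1+k_2)$. (A skew brace is a triple $(A,+,\circ)$ of two group structures with $a\circ(b+c)=a\circ b-a+a\circ c$; an isomorphism of skew braces is a bijection that is a homomorphism for both operations.) 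*)

(* Defs.v *)
From HB Require Import structures.
From mathcomp Require Import all_boot all_algebra.
Set Implicit Arguments. Unset Strict Implicit. Unset Printing Implicit Defensive.
Import GRing.Theory.
Local Open Scope ring_scope.

Definition is_endo (F : zmodType) (phi : F -> F) : Prop :=
  forall a b : F, phi (a + b) = phi a + phi b.

Definition is_aut (F : zmodType) (sigma : F -> F) : Prop :=
  is_endo sigma /\ bijective sigma.

(* Z/2Z is represented by bool: false = 0, true = 1; addition is xor (addb);
   the representative [k] in {0,1} of k acts by "if k then _ else 0". *)

Definition psi (F : zmodType) (phi : F -> F) (z : F) (f : F) (k1 k2 : bool) : F :=
  if k2 then phi f - (if k1 then z else 0) else 0.

Definition admissible (F : zmodType) (phi : F -> F) (y z : F) : Prop :=
  [/\ is_endo phi,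
      y + y = 0,
      phi z = phi y - (z + z),
      (forall f : F, phi (phi f) = - (phi f + phi f)) &
      (forall g : F, exists f k1 k2, psi phi z f k1 k2 = g)].

Definition sb_add (F : zmodType) (y : F) (a b : F * bool) : F * bool :=
  (a.1 + (if a.2 then - b.1 else b.1) + (if a.2 && b.2 then y else 0),
   addb a.2 b.2).

Definition sb_circ (F : zmodType) (phi : F -> F) (y z : F)
    (a b : F * bool) : F * bool :=
  (a.1 + (if a.2 then - b.1 else b.1) + psi phi z a.1 a.2 b.2
     + (if a.2 && b.2 then y else 0),
   addb a.2 b.2).

Definition sb_iso (F : zmodType) (phi : F -> F) (y z : F)
    (phi1 : F -> F) (y1 z1 : F) (g : F * bool -> F * bool) : Prop :=
  [/\ bijective g,
      (forall a b, g (sb_add y a b) = sb_add y1 (g a) (g b)) &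
      (forall a b, g (sb_circ phi y z a b) = sb_circ phi1 y1 z1 (g a) (g b))].

Definition sb_isomorphic (F : zmodType) (phi : F -> F) (y z : F)
    (phi1 : F -> F) (y1 z1 : F) : Prop :=
  exists g, sb_iso phi y z phi1 y1 z1 g.

(* Main.v *)
Require Import Defs.
From HB Require Import structures.
From mathcomp Require Import all_boot all_algebra.
Import GRing.Theory.
Local Open Scope ring_scope.

Lemma circ_dec (F : zmodType) (phi : F -> F) (y z : F) a b :
  sb_circ phi y z a b = sb_add y (psi phi z a.1 a.2 b.2, false) (sb_add y a b).
Proof.
rewrite /sb_circ /sb_add /= addr0; congr (_, _).
by rewrite [RHS]addrC addrAC.
Qed.

Lemma add_cancel (F : zmodType) (y : F) u v x :
  sb_add y u x = sb_add y v x -> u = v.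
Proof.
case: u v x => [u1 k] [v1 l] [x1 m]; rewrite /sb_add /= => [[]].
by case: k; case: l; case: m => //= e _; congr (_, _); move: e; rewrite ?addr0 => /addIr // /addIr.
Qed.

Lemma endo0 (F : zmodType) (f : F -> F) : is_endo f -> f 0 = 0.
Proof. by move=> h; apply/(addrI (f 0)); rewrite -h !addr0. Qed.

Lemma endoN (F : zmodType) (f : F -> F) : is_endo f -> forall x, f (- x) = - f x.
Proof. by move=> h x; apply/(addrI (f x)); rewrite -h !subrr endo0. Qed.

Lemma fwd (F : zmodType) (phi : F -> F) (y z : F) (phi1 : F -> F) (y1 z1 : F)
    (hA : admissible phi y z) (hA1 : admissible phi1 y1 z1) :
  sb_isomorphic phi y z phi1 y1 z1 ->
  exists sigma : F -> F,
    [/\ is_aut sigma,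
        (exists sigma_inv : F -> F,
           [/\ cancel sigma sigma_inv, cancel sigma_inv sigma &
               forall f : F, phi1 f = sigma (phi (sigma_inv f))]),
        sigma y = y1 &
        exists f : F, z1 - sigma z = phi1 f].
Proof.
case=> g [[gi gK giK] hadd hcirc].
case: hA => ephi _ _ _ hsurj.
have hp : forall a b, g (psi phi z a.1 a.2 b.2, false) =
    (psi phi1 z1 (g a).1 (g a).2 (g b).2, false).
  move=> a b; apply: (@add_cancel _ y1 _ _ (g (sb_add y a b))).
  by rewrite -hadd -circ_dec hcirc circ_dec hadd.
have h2 : forall h, (g (h, false)).2 = false.
  move=> h; case: (hsurj h) => f [k1 [k2 e]].
  by have := hp (f, k1) (0, k2); rewrite /= e => ->.
pose sigma h := (g (h, false)).1.
have hgF : forall h, g (h, false) = (sigma h, false).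
  move=> h; have := h2 h; rewrite /sigma; by case: (g (h, false)) => a b /= ->.
pose c := (g (0, true)).1.
have hT0 : forall x, g (x, true) = sb_add y1 (sigma x, false) (g (0, true)).
  move=> x; rewrite -hgF -hadd /sb_add /= !addr0 //.
have hc2 : (g (0, true)).2 = true.
  have := giK (0, true); case: (gi (0, true)) => x [].
    by rewrite hT0 /sb_add /= => [[]].
  by rewrite hgF.
have hT : forall x, g (x, true) = (sigma x + c, true).
  by move=> x; rewrite hT0 /sb_add /= addr0 hc2.
have sA : is_endo sigma.
  move=> a b; have := hadd (a, false) (b, false).
  by rewrite !hgF /sb_add /= !addr0 => [[]].
pose sinv h := (gi (h, false)).1.
have hgi : forall h, gi (h, false) = (sinv h, false).
  move=> h; have := giK (h, false); rewrite /sinv.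
  by case: (gi (h, false)) => x [] //; rewrite hT.
have sK : cancel sigma sinv.
  by move=> h; rewrite /sinv -hgF gK.
have sKi : cancel sinv sigma.
  by move=> h; have := giK (h, false); rewrite hgi hgF => [[]].
exists sigma; split.
- by split => //; exists sinv.
- exists sinv; split => // f.
  have := hp (sinv f, false) (0, true).
  by rewrite /= !hgF /= sKi hc2 /= !subr0 => [[]].
- have := hadd (0, true) (0, true).
  by rewrite hT /sb_add /= hgF !oppr0 !add0r subrr add0r => [[]].
- exists c; have := hp (0, true) (0, true).
  rewrite /= !hgF hT /= endo0 // sub0r (@endoN _ sigma sA) (@endo0 _ sigma sA) add0r => [[]] e.
  by rewrite e addrC subrK.

Qed.

Lemma bwd (F : zmodType) (phi : F -> F) (y z : F) (phi1 : F -> F) (y1 z1 : F)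
    (hA : admissible phi y z) (hA1 : admissible phi1 y1 z1) :
  (exists sigma : F -> F,
    [/\ is_aut sigma,
        (exists sigma_inv : F -> F,
           [/\ cancel sigma sigma_inv, cancel sigma_inv sigma &
               forall f : F, phi1 f = sigma (phi (sigma_inv f))]),
        sigma y = y1 &
        exists f : F, z1 - sigma z = phi1 f]) ->
  sb_isomorphic phi y z phi1 y1 z1.
Proof.
case=> s [[sA _] [si [sK siK hphi]] sy [w hw]].
case: hA1 => ephi1 _ _ _ _.
have hps : forall f, phi1 (s f) = s (phi f) by move=> f; rewrite hphi sK.
have sN := @endoN _ _ sA; have s0 := @endo0 _ _ sA.
exists (fun a => (s a.1 + (if a.2 then w else 0), a.2)); split.
- exists (fun a => (si (a.1 - (if a.2 then w else 0)), a.2)).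
    by case=> f k /=; rewrite addrK sK.
  by case=> f k /=; rewrite siK subrK.
- case=> [f1 [|]] [f2 [|]]; rewrite /sb_add /= ?addr0 ?sA ?sN ?sy; congr (_, _).
  + by rewrite opprD addrACA subrr addr0.
  + by rewrite addrAC.
  + by rewrite addrA.
- case=> [f1 [|]] [f2 [|]]; rewrite /sb_circ /psi /= ?addr0 ?subr0 ?sA ?sN ?sy ?ephi1 ?hps; congr (_, _).
  + by rewrite -hw opprD [s f1 + w + _]addrACA subrr addr0 (addrC z1) [s (phi f1) + (_ + _)]addrA addrK.
  + by rewrite addrAC.
  + by rewrite [s f1 + (_ + _)]addrA [LHS]addrAC.
Qed.

Theorem mainTheorem17 (F : finZmodType) (hF : (1 < #|F|)%N)
    (phi : F -> F) (y z : F) (phi1 : F -> F) (y1 z1 : F)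
    (hA : admissible phi y z) (hA1 : admissible phi1 y1 z1) :
  sb_isomorphic phi y z phi1 y1 z1 <->
  exists sigma : F -> F,
    [/\ is_aut sigma,
        (exists sigma_inv : F -> F,
           [/\ cancel sigma sigma_inv, cancel sigma_inv sigma &
               forall f : F, phi1 f = sigma (phi (sigma_inv f))]),
        sigma y = y1 &
        exists f : F, z1 - sigma z = phi1 f].
Proof. split; [exact: fwd | exact: bwd]. Qed.
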